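(* For every DML query $Q$, the rewriting system $\mathcal{R}^{\mathrm{dml}}_{\Sigma,\mathcal{D}}(Q)$ is terminating (it admits no infinite sequence of one-step rewrites).
   Context: Setting. Order-sorted signature $\Sigma$ with sorts $\mathsf{Fact}$, $\mathsf{Bool}$ interpreted in an algebra $\mathcal{D}$ presented by structural axioms $A$ and confluent terminating equations with Boolean connectives and Boolean-valued equality; ground $\mathsf{Bool}$ terms reduce to $\mathsf{true}$/$\mathsf{false}$. Multisets of facts: associative commutative $\circ$ with identity $\emptyset$. Nominal sorts $s$ have values $\iota^s_n$ ($n\in\mathbb{N}$); for each nominal sort a fresh-fact constructor $C_s$; multisets of fresh facts are built analogously; $\upsilon(C_{s_1}(\iota^{s_1}_{m_1})\circ\cdots\circ C_{s_n}(\iota^{s_n}_{m_n}))=C_{s_1}(\iota^{s_1}_{m_1+1})\circ\cdots\circ C_{s_n}(\iota^{s_n}_{m_n+1})$. Patterns: $\circ$-combinations of groups $[F]_!$ (keep), $[F]_?$ (retain), $[F]_0$ (delete) with $F$ non-empty multisets of (possibly non-ground) facts, and $[G]_\star$ with $G$ a non-empty multiset of fresh facts (possibly with variables); $P_!,P_?,P_0,P_\star$ denote the respective wrapped multisets (empty if absent). $P$ is terminating if $P_?\neq\emptyset$, semi-terminating if $P_?\circ P_0\neq\emptyset$, terminating and preserving if $P_?\neq\emptyset$ and $P_0=P_\star=\emptyset$. Conditions: $\mathrm{False}$, $\{B\}$, $\neg\psi$, $\psi_1\vee\psi_2$, $\exists P.\psi$ ($P$ terminating and preserving). Condition-evaluation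 stacks and rules (''$X\mapsto Y$'' meaning $\{F,S\,X\}^c\to\{F,S\,Y\}^c$, $F$ the current database, $\sigma=\{\vec a/\vec v\}$): $[\vec a]_{\mathrm{False}}\mapsto\mathrm{Res}(\mathsf{false})$; $[\vec a]_{\{B\}}\mapsto\mathrm{Res}(\sigma(B))$; $[\vec a]_{\neg\psi}\mapsto\mathrm{Not}[\vec a]_\psi$; $\mathrm{Not}\,\mathrm{Res}(B)\mapsto\mathrm{Res}(\neg B)$; $[\vec a]_{\psi_1\vee\psi_2}\mapsto[\vec a]^\downarrow_{\psi_1}[\vec a]_{\psi_2}$; $[\vec a]^\downarrow_\psi\mathrm{Res}(\mathsf{true})\mapsto\mathrm{Res}(\mathsf{true})$; $[\vec a]^\downarrow_\psi\mathrm{Res}(\mathsf{false})\mapsto[\vec a]_\psi$; $[\vec a]_{\exists P.\psi}\mapsto[F\mid\vec a]_{\exists P.\psi}$; if $\vec w$ lists the variables of $P$ not in $\vec v$, $\sigma'=\{\vec a/\vec v,\vec b/\vec w\}$, $F'=F''\circ\sigma'(P_!\circ P_?)$: $[F'\mid\vec a]_{\exists P.\psi}\mapsto[F''\circ\sigma'(P_!)\mid\vec a]_{\exists P.\psi}[\vec a,\vec b]^{\vec v,\vec w}_\psi$; $[F'\mid\vec a]_{\exists P.\psi}\mathrm{Res}(\mathsf{false})\mapsto[F'\mid\vec a]_{\exists P.\psi}$; $[F'\mid\vec a]_{\exists P.\psi}\mathrm{Res}(\mathsf{true})\mapsto\mathrm{Res}(\mathsf{true})$; if no matching exists, $[F'\mid\vec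 a]_{\exists P.\psi}\mapsto\mathrm{Res}(\mathsf{false})$. DML queries: $\emptyset$, $\mathrm{ok}$, facts $f$, $D\oplus D'$, $\varphi\Rightarrow D$, $\mathrm{From}\,P.D$ with $P$ terminating, and $\mathrm{From}\,P.D$ with $P$ semi-terminating and $D$ success assured (success-assured: $\mathrm{ok}$, a fact, or $D_1\oplus D_2$ with $D_1$ or $D_2$ success assured). Quantifiers bind the variables of $P$ not bound by the context. $\mathcal{R}^{\mathrm{dml}}_{\Sigma,\mathcal{D}}(Q)$: states $\{F,F',F_\star,S\}^d$ ($F$ current database, $F'$ facts to be added, $F_\star$ fresh facts, $S$ stack, top at right), terminal $\mathrm{New}(G,G_\star)$ and $\mathrm{Fail}(G,G_\star)$. Frames, for subqueries $R$ of $Q$: $\mathrm{Ok}$; $[\vec a]^{\vec v}_R$; $[\vec a]^{\vec v,\downarrow}_R$; $[\vec a\mid S']^{\vec v}_R$ ($S'$ a condition stack); iterator frames $[H\mid\vec a\mid B]^{\vec v}_{\mathrm{From}\,P.R}$ and tentative frames $[H\mid\vec a\mid B,F_0]^{\vec v}_{\mathrm{From}\,P.R}$ ($B$ Boolean). With ''$X\mapsto Y$'' meaning $\{F,F',F_\star,S\,X\}^d\to\{F,F',F_\star,S\,Y\}^d$: $\mathrm{Ok}\,\mathrm{Ok}\mapsto\mathrm{Ok}$; $[\vec a]_{\mathrm{ok}}\mapsto\mathrm{Ok}$; $[\vec a]_\emptyset\mapsto$ (nothing); $\{F,F',F_\star,S[\vec a]_f\}^d\to\{F,F'\circ\sigma(f),F_\star,S\,\mathrm{Ok}\}^d$;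 $[\vec a]_{R_1\oplus R_2}\mapsto[\vec a]^\downarrow_{R_2}[\vec a]_{R_1}$; $[\vec a]^\downarrow_{R_2}\mathrm{Ok}\mapsto\mathrm{Ok}[\vec a]_{R_2}$; $[\vec a]^\downarrow_{R_2}\mapsto[\vec a]_{R_2}$ (when it is the top frame); $[\vec a]_{\varphi\Rightarrow R}\mapsto[\vec a\mid[\vec a]^{\vec v}_\varphi]_R$; $[\vec a\mid\mathrm{Res}(\mathsf{false})]_R\mapsto$ (nothing); $[\vec a\mid\mathrm{Res}(\mathsf{true})]_R\mapsto[\vec a]_R$; for each condition rule $\{F,S'\}^c\to\{F,S''\}^c$, $[\vec a\mid S']_R\mapsto[\vec a\mid S'']_R$; $[\vec a]_{\mathrm{From}\,P.R}\mapsto[F\mid\vec a\mid\mathsf{false}]_{\mathrm{From}\,P.R}$; if $\vec w$ lists the variables of $P$ not in $\vec v$, $\sigma'=\{\vec a/\vec v,\vec b/\vec w\}$, $F=G\circ\sigma'(P_!\circ P_?\circ P_0)$, $H=H'\circ\sigma'(P_!\circ P_?\circ P_0)$ and $F_\star=K\circ\sigma'(P_\star)$, then $\{F,F',F_\star,S[H\mid\vec a\mid B]_{\mathrm{From}\,P.R}\}^d\to\{G\circ\sigma'(P_!\circ P_?),F',K\circ\upsilon(\sigma'(P_\star)),S[H'\circ\sigma'(P_!)\mid\vec a\mid B,\sigma'(P_0)]_{\mathrm{From}\,P.R}[\vec a,\vec b]^{\vec v,\vec w}_R\}^d$; $\{F,F',F_\star,S[H\mid\vec a\mid B,F_0]_{\mathrm{From}\,P.R}\}^d\to\{F\circ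 F_0,F',F_\star,S[H\circ F_0\mid\vec a\mid B]_{\mathrm{From}\,P.R}\}^d$; $[H\mid\vec a\mid B,F_0]_{\mathrm{From}\,P.R}\mathrm{Ok}\mapsto[H\mid\vec a\mid\mathsf{true}]_{\mathrm{From}\,P.R}$; if $H$ does not match $H'\circ\sigma'(P_!\circ P_?\circ P_0)$ for any $H',\vec b$, then $[H\mid\vec a\mid B]_{\mathrm{From}\,P.R}\mapsto\delta(B)$ with $\delta(\mathsf{true})=\mathrm{Ok}$, $\delta(\mathsf{false})=$ nothing; $\{F,F',F_\star,\mathrm{Ok}\}^d\to\mathrm{New}(F\circ F',F_\star)$; $\{F,F',F_\star,\text{empty}\}^d\to\mathrm{Fail}(F\circ F',F_\star)$. *)

(* Defs.v *)
From mathcomp Require Import all_boot.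
Set Implicit Arguments. Unset Strict Implicit. Unset Printing Implicit Defensive.

(* The data algebra D, abstracted through its interface.                     *)
Record DMLsig := {
  Var   : eqType;
  Val   : Type;
  wt    : Var -> Val -> bool;              (* value admissible for the sort of
                                              the variable                    *)
  Fact  : eqType;                          (* elements of sort Fact of D
                                              (equality = equality in D)      *)
  FTerm : Type;                            (* possibly non-ground Fact terms   *)
  finst : (Var -> Val) -> FTerm -> Fact;   (* sigma(f), normalised             *)
  fvars : FTerm -> seq Var;
  BTerm : Type;
  binst : (Var -> Val) -> BTerm -> bool;
  NSort : eqType;
  iota  : NSort -> nat -> Val
}.

Section DML.
Variable Sg : DMLsig.
Local Notation V := (Var Sg).
Local Notation Vl := (Val Sg).
Local Notation Fct := (Fact Sg).
Local Notation FT := (FTerm Sg).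
Local Notation BT := (BTerm Sg).
Local Notation NS := (NSort Sg).

(* fresh facts C_s(iota^s_n) are represented by (s, n) *)
Definition freshfact := (NS * nat)%type.

(* a fresh-fact pattern entry C_s(t), t a variable or a constant iota^s_n *)
Definition fpent := (NS * (V + nat))%type.

(* A pattern: P_!, P_?, P_0 (multisets of fact terms) and P_star. *)
Record pat := Pat {
  pkeep : seq FT;
  pret  : seq FT;
  pdel  : seq FT;
  pfresh : seq fpent
}.

Definition nvar (t : V + nat) : seq V := if t is inl x then [:: x] else [::].

Definition pvars (P : pat) : seq V :=
  flatten (map (@fvars Sg) (pkeep P ++ pret P ++ pdel P))
  ++ flatten (map (fun e : fpent => nvar e.2) (pfresh P)).

Definition terminating (P : pat) : bool := ~~ nilp (pret P).
Definition semi_terminating (P : pat) : bool := ~~ nilp (pret P ++ pdel P).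
Definition preserving (P : pat) : bool := nilp (pdel P) && nilp (pfresh P).

Inductive cond :=
| CFalse
| CBool of BT
| CNot of cond
| COr of cond & cond
| CEx of pat & cond.

Inductive query :=
| QEmpty
| QOk
| QFact of FT
| QPlus of query & query
| QImp of cond & query
| QFrom of pat & query.

Fixpoint success_assured (D : query) : bool :=
  match D with
  | QOk => true
  | QFact _ => true
  | QPlus D1 D2 => success_assured D1 || success_assured D2
  | _ => false
  end.

Fixpoint wf_cond (c : cond) : Prop :=
  match c with
  | CNot c => wf_cond c
  | COr c1 c2 => wf_cond c1 /\ wf_cond c2
  | CEx P c => terminating P /\ preserving P /\ wf_cond c
  | _ => True
  end.

Fixpoint dml_query (D : query) : Prop :=
  match D with
  | QPlus D1 D2 => dml_query D1 /\ dml_query D2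
  | QImp c D => wf_cond c /\ dml_query D
  | QFrom P D =>
      (terminating P \/ (semi_terminating P /\ success_assured D)) /\ dml_query D
  | _ => True
  end.

Fixpoint subq (R D : query) : Prop :=
  R = D \/
  match D with
  | QPlus D1 D2 => subq R D1 \/ subq R D2
  | QImp _ D => subq R D
  | QFrom _ D => subq R D
  | _ => False
  end.

Fixpoint subc_c (c d : cond) : Prop :=
  c = d \/
  match d with
  | CNot d => subc_c c d
  | COr d1 d2 => subc_c c d1 \/ subc_c c d2
  | CEx _ d => subc_c c d
  | _ => False
  end.

Fixpoint subc (c : cond) (D : query) : Prop :=
  match D with
  | QPlus D1 D2 => subc c D1 \/ subc c D2
  | QImp d D => subc_c c d \/ subc c D
  | QFrom _ D => subc c D
  | _ => False
  end.

(* substitutions: a frame [a]^v stores the bound variables vs = v and a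
   valuation s with a = map s vs *)
Definition inst (s : V -> Vl) (ts : seq FT) : seq Fct := map (finst s) ts.

Definition ext_vars (vs : seq V) (P : pat) : seq V :=
  undup [seq x <- pvars P | x \notin vs].

Definition ext_env (vs : seq V) (s : V -> Vl) (P : pat) (b : V -> Vl) : V -> Vl :=
  fun x => if x \in ext_vars vs P then b x else s x.

Definition wt_on (w : seq V) (b : V -> Vl) : Prop :=
  forall x, x \in w -> wt x (b x).

(* L = sigma'(P_star) as a multiset of fresh facts *)
Definition fresh_inst (s : V -> Vl) (e : fpent) (g : freshfact) : Prop :=
  g.1 = e.1 /\ match e.2 with
               | inl x => s x = iota e.1 g.2
               | inr n => g.2 = n
               end.

Fixpoint fresh_match (s : V -> Vl) (G : seq fpent) (L : seq freshfact) : Prop :=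
  match G, L with
  | [::], [::] => True
  | e :: G, g :: L => fresh_inst s e g /\ fresh_match s G L
  | _, _ => False
  end.

Definition upsilon (L : seq freshfact) : seq freshfact :=
  [seq (g.1, g.2.+1) | g <- L].

(* Condition evaluation (stacks: top of stack = last element of the seq)     *)
Inductive cframe :=
| CEval of seq V & (V -> Vl) & cond
| CRes of bool
| CNotF
| CDown of seq V & (V -> Vl) & cond
| CExF of seq Fct & seq V & (V -> Vl) & pat & cond.

Inductive clocal (F : seq Fct) : seq cframe -> seq cframe -> Prop :=
| CL_false vs s :
    clocal F [:: CEval vs s CFalse] [:: CRes false]
| CL_bool vs s B :
    clocal F [:: CEval vs s (CBool B)] [:: CRes (binst s B)]
| CL_not vs s c :
    clocal F [:: CEval vs s (CNot c)] [:: CNotF; CEval vs s c]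
| CL_notres b :
    clocal F [:: CNotF; CRes b] [:: CRes (~~ b)]
| CL_or vs s c1 c2 :
    clocal F [:: CEval vs s (COr c1 c2)] [:: CDown vs s c1; CEval vs s c2]
| CL_downT vs s c :
    clocal F [:: CDown vs s c; CRes true] [:: CRes true]
| CL_downF vs s c :
    clocal F [:: CDown vs s c; CRes false] [:: CEval vs s c]
| CL_ex vs s P c :
    clocal F [:: CEval vs s (CEx P c)] [:: CExF F vs s P c]
| CL_exmatch H H'' vs s P c b :
    wt_on (ext_vars vs P) b ->
    perm_eq H (H'' ++ inst (ext_env vs s P b) (pkeep P ++ pret P)) ->
    clocal F [:: CExF H vs s P c]
             [:: CExF (H'' ++ inst (ext_env vs s P b) (pkeep P)) vs s P c;
                 CEval (vs ++ ext_vars vs P) (ext_env vs s P b) c]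
| CL_exF H vs s P c :
    clocal F [:: CExF H vs s P c; CRes false] [:: CExF H vs s P c]
| CL_exT H vs s P c :
    clocal F [:: CExF H vs s P c; CRes true] [:: CRes true]
| CL_exnone H vs s P c :
    (forall b H'', wt_on (ext_vars vs P) b ->
        ~ perm_eq H (H'' ++ inst (ext_env vs s P b) (pkeep P ++ pret P))) ->
    clocal F [:: CExF H vs s P c] [:: CRes false].

Definition cstep (F : seq Fct) (S1 S2 : seq cframe) : Prop :=
  exists S X Y, clocal F X Y /\ S1 = S ++ X /\ S2 = S ++ Y.

Inductive dframe :=
| DOk
| DEval of seq V & (V -> Vl) & query
| DDown of seq V & (V -> Vl) & query
| DCond of seq V & (V -> Vl) & seq cframe & query
| DIter of seq Fct & seq V & (V -> Vl) & bool & pat & query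
      (* [H|a|B]^v_{From P.R}   (label From P.R stored as P and R) *)
| DTent of seq Fct & seq V & (V -> Vl) & bool & seq Fct & pat & query.

Inductive dstate :=
| DState of seq Fct & seq Fct & seq freshfact & seq dframe
| DNew of seq Fct & seq freshfact
| DFail of seq Fct & seq freshfact.

Inductive dlocal (F : seq Fct) : seq dframe -> seq dframe -> Prop :=
| DL_okok : dlocal F [:: DOk; DOk] [:: DOk]
| DL_ok vs s : dlocal F [:: DEval vs s QOk] [:: DOk]
| DL_empty vs s : dlocal F [:: DEval vs s QEmpty] [::]
| DL_plus vs s R1 R2 :
    dlocal F [:: DEval vs s (QPlus R1 R2)] [:: DDown vs s R2; DEval vs s R1]
| DL_downok vs s R : dlocal F [:: DDown vs s R; DOk] [:: DOk; DEval vs s R]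
| DL_down vs s R : dlocal F [:: DDown vs s R] [:: DEval vs s R]
| DL_imp vs s c R :
    dlocal F [:: DEval vs s (QImp c R)] [:: DCond vs s [:: CEval vs s c] R]
| DL_condF vs s R : dlocal F [:: DCond vs s [:: CRes false] R] [::]
| DL_condT vs s R : dlocal F [:: DCond vs s [:: CRes true] R] [:: DEval vs s R]
| DL_cond vs s S1 S2 R :
    cstep F S1 S2 -> dlocal F [:: DCond vs s S1 R] [:: DCond vs s S2 R]
| DL_from vs s P R :
    dlocal F [:: DEval vs s (QFrom P R)] [:: DIter F vs s false P R]
| DL_tentok H vs s B F0 P R :
    dlocal F [:: DTent H vs s B F0 P R; DOk] [:: DIter H vs s true P R]
| DL_nomatch H vs s B P R :
    (forall b H', wt_on (ext_vars vs P) b ->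
        ~ perm_eq H (H' ++ inst (ext_env vs s P b) (pkeep P ++ pret P ++ pdel P))) ->
    dlocal F [:: DIter H vs s B P R] (if B then [:: DOk] else [::]).

Inductive dstep : dstate -> dstate -> Prop :=
| DS_local F F' Fs S X Y :
    dlocal F X Y -> dstep (DState F F' Fs (S ++ X)) (DState F F' Fs (S ++ Y))
| DS_fact F F' Fs S vs s f :
    dstep (DState F F' Fs (S ++ [:: DEval vs s (QFact f)]))
          (DState F (F' ++ [:: finst s f]) Fs (S ++ [:: DOk]))
| DS_iter F F' Fs S H vs s B P R b G H' K L :
    wt_on (ext_vars vs P) b ->
    perm_eq F (G ++ inst (ext_env vs s P b) (pkeep P ++ pret P ++ pdel P)) ->
    perm_eq H (H' ++ inst (ext_env vs s P b) (pkeep P ++ pret P ++ pdel P)) ->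
    fresh_match (ext_env vs s P b) (pfresh P) L ->
    perm_eq Fs (K ++ L) ->
    dstep (DState F F' Fs (S ++ [:: DIter H vs s B P R]))
          (DState (G ++ inst (ext_env vs s P b) (pkeep P ++ pret P)) F'
                  (K ++ upsilon L)
                  (S ++ [:: DTent (H' ++ inst (ext_env vs s P b) (pkeep P)) vs s B
                                  (inst (ext_env vs s P b) (pdel P)) P R;
                           DEval (vs ++ ext_vars vs P) (ext_env vs s P b) R]))
| DS_tent F F' Fs S H vs s B F0 P R :
    dstep (DState F F' Fs (S ++ [:: DTent H vs s B F0 P R]))
          (DState (F ++ F0) F' Fs (S ++ [:: DIter (H ++ F0) vs s B P R]))
| DS_new F F' Fs : dstep (DState F F' Fs [:: DOk]) (DNew (F ++ F') Fs)
| DS_fail F F' Fs : dstep (DState F F' Fs [::]) (DFail (F ++ F') Fs).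

(* states of R^dml(Q): all frames are for subqueries / subconditions of Q *)
Definition cframe_ok (Q : query) (f : cframe) : Prop :=
  match f with
  | CEval _ _ c | CDown _ _ c => subc c Q
  | CExF _ _ _ P c => subc (CEx P c) Q
  | _ => True
  end.

Definition dframe_ok (Q : query) (f : dframe) : Prop :=
  match f with
  | DOk => True
  | DEval _ _ R | DDown _ _ R => subq R Q
  | DCond _ _ Sc R => subq R Q /\ foldr (fun c P => cframe_ok Q c /\ P) True Sc
  | DIter _ _ _ _ P R => subq (QFrom P R) Q
  | DTent _ _ _ _ _ P R => subq (QFrom P R) Q
  end.

Definition valid_dstate (Q : query) (st : dstate) : Prop :=
  match st with
  | DState _ _ _ St => foldr (fun f P => dframe_ok Q f /\ P) True St
  | _ => True
  end.

End DML.

(* Main.v *)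
Require Import Defs.
From mathcomp Require Import all_boot.
From mathcomp Require Import zify.

Section Proof.
Variable Sg : DMLsig.

Fixpoint cw (M : nat) (c : cond Sg) : nat :=
  match c with
  | CFalse => 2 | CBool _ => 2
  | CNot c => cw M c + 2
  | COr c1 c2 => cw M c1 + cw M c2 + 1
  | CEx _ c => M.+1 * (cw M c + 2) + 1
  end.

Definition cfw M (x : cframe Sg) : nat :=
  match x with
  | CEval _ _ c => cw M c
  | CRes _ => 1 | CNotF => 1
  | CDown _ _ c => cw M c
  | CExF H _ _ _ c => (size H).+1 * (cw M c + 2)
  end.

Definition cm M (S : seq (cframe Sg)) := sumn (map (cfw M) S).

Definition cterm (x : cframe Sg) : bool :=
  if x is CExF _ _ _ P _ then terminating P else true.

Lemma cw_pos M c : 0 < cw M c.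
Proof. elim: c => //= *; lia. Qed.

Lemma cm_cat M a b : cm M (a ++ b) = cm M a + cm M b.
Proof. by rewrite /cm map_cat sumn_cat. Qed.

Lemma clocal_dec M F X Y : clocal F X Y -> size F <= M -> all cterm X ->
  cm M Y < cm M X.
Proof.
case => /=; rewrite /cm /=; try (intros; lia);
  try (intros; have := cw_pos M c; lia); try (intros; have := cw_pos M c; nia).
- move=> H H'' vs s P c b _ hp hF; rewrite andbT /terminating /nilp => Ht.
  have := perm_size hp; rewrite size_cat /inst !size_map !size_cat.
  have := cw_pos M c; rewrite size_map; nia.
Qed.

Fixpoint qw M (q : query Sg) : nat :=
  match q with
  | QEmpty => 1 | QOk => 2 | QFact _ => 2
  | QPlus a b => qw M a + qw M b + 3
  | QImp c R => cw M c + qw M R + 2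
  | QFrom _ R => M.+1 * (qw M R + 2) + 1
  end.

Definition W M R k := k.+1 * (qw M R + 2).

Definition hf M (x : dframe Sg) (v : nat * bool) : nat * bool :=
  match x with
  | DOk => (v.1.+1, true)
  | DEval _ _ R => (qw M R + v.1, success_assured R)
  | DDown _ _ R => (qw M R + 2 + v.1, v.2 || success_assured R)
  | DCond _ _ Sc R => (cm M Sc + qw M R + 1 + v.1, false)
  | DIter H _ _ B _ R => (W M R (size H) + v.1, B)
  | DTent H _ _ B F0 _ R =>
      if v.2 then (W M R (size H) + 1 + v.1, true)
      else (W M R (size H + size F0) + 1 + v.1, B)
  end.

Definition val M S := foldr (hf M) (0, false) S.
Definition lt' (a b : nat * bool) := a.1 < b.1 /\ (b.2 -> a.2).

Lemma W_le M R k k' : k <= k' -> W M R k <= W M R k'.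
Proof. by move=> h; rewrite /W leq_mul2r ltnS h orbT. Qed.

Lemma W_lt M R k k' : k < k' -> W M R k + qw M R + 1 < W M R k'.
Proof. rewrite /W => h; nia. Qed.

Lemma hf_mono M x a b : lt' a b -> lt' (hf M x a) (hf M x b).
Proof.
case: a => n a; case: b => m b; rewrite /lt' /= => -[h1 h2].
case: x => /=; intros; try (split; [lia|]); try done.
- by case/orP => [/h2 ->|->]; rewrite ?orbT.
- have := @W_le M q _ _ (leq_addr (size l1) (size l)).
  case: b h2 => [-> //|_]; case: a => /= hw; split => //; lia.
Qed.

Lemma val_mono M S a b : lt' a b ->
  lt' (foldr (hf M) a S) (foldr (hf M) b S).
Proof. elim: S => //= x S IH h; exact: hf_mono (IH h). Qed.

Definition tsize (x : dframe Sg) := if x is DTent _ _ _ _ F0 _ _ then size F0 else 0.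
Definition tsum (S : seq (dframe Sg)) := sumn (map tsize S).

Lemma tsum_cat a b : tsum (a ++ b) = tsum a + tsum b.
Proof. by rewrite /tsum map_cat sumn_cat. Qed.

Definition dallok Q (S : seq (dframe Sg)) := foldr (fun f P => dframe_ok Q f /\ P) True S.

Lemma foldr_and_cat T (p : T -> Prop) s1 s2 :
  foldr (fun f P => p f /\ P) True (s1 ++ s2) -> foldr (fun f P => p f /\ P) True s2.
Proof. by elim: s1 => //= x s IH [_ /IH]. Qed.

Lemma subq_from (Q : query Sg) (P : pat Sg) (R : query Sg) : dml_query Q -> subq (QFrom P R) Q ->
  terminating P \/ (semi_terminating P /\ success_assured R).
Proof.
elim: Q => [||f|a IHa b IHb|c a IH|P0 a IH] /= hQ.
- by case.
- by case.
- by case.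
- case: hQ => ha hb [//|[]]; [exact: IHa|exact: IHb].
- case: hQ => _ h [//|]; exact: IH.
- case: hQ => h1 h2 [[-> ->] //|]; exact: IH.
Qed.

Lemma subc_c_wf (c d : cond Sg) : subc_c c d -> wf_cond d -> wf_cond c.
Proof.
elim: d => [|B|d IH|d1 IH1 d2 IH2|P d IH] /=.
- by case=> // ->.
- by case=> // ->.
- by case=> [->//|h hd]; exact: IH.
- case=> [->//|[h|h] [h1 h2]]; [exact: IH1|exact: IH2].
- case=> [->//|h [_ [_ h2]]]; exact: IH.
Qed.

Lemma subc_wf (c : cond Sg) (Q : query Sg) : subc c Q -> dml_query Q -> wf_cond c.
Proof.
elim: Q => [||f|a IHa b IHb|d a IH|P a IH] //=.
- by case=> h [ha hb]; [exact: IHa|exact: IHb].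
- by case=> h [hd ha]; [exact: subc_c_wf h hd|exact: IH].
- by move=> h [_ ha]; exact: IH.
Qed.

Lemma cok_term (Q : query Sg) (s : seq (cframe Sg)) : dml_query Q ->
  foldr (fun c P => cframe_ok Q c /\ P) True s -> all cterm s.
Proof.
move=> hQ; elim: s => //= x s IH [hx /IH ->]; rewrite andbT.
case: x hx => //= ? ? ? P c h.
by case: (@subc_wf (CEx P c) Q h hQ) => ->.
Qed.

Lemma dlocal_dec (Q : query Sg) M (F : seq (Fact Sg)) (X Y : seq (dframe Sg)) : dml_query Q -> dlocal F X Y -> size F <= M ->
  dallok Q X -> tsum Y <= tsum X /\ lt' (val M Y) (val M X).
Proof.
move=> hQ hl hF; case: hl => /=; rewrite /lt' /tsum /=; intros.
all: try (split; [lia| split; [lia|done]]).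
- by rewrite /cm /= addn0; split; [|split]; [lia|lia|].
- lazymatch goal with h : cstep _ _ _ |- _ => move: h end.
  move=> [Sa [Xc [Yc [hc [E1 E2]]]]]; subst.
  lazymatch goal with h : _ /\ True |- _ => move: h end.
  move=> [[_ hok] _].
  have := @clocal_dec M F Xc Yc hc hF (@cok_term Q Xc hQ (@foldr_and_cat _ _ Sa Xc hok)).
  rewrite !cm_cat; split; [lia|split; [lia|done]].
- rewrite /W; split; [lia|split; [nia|done]].
- case: B => /=; (split; [lia|]); rewrite /W; split; [nia|done|nia|done].
Qed.

Definition Mst (st : dstate Sg) :=
  if st is DState F _ _ St then size F + tsum St else 0.
Definition Vst M (st : dstate Sg) :=
  if st is DState _ _ _ St then (val M St).1 else 0.
Definition isSt (st : dstate Sg) := if st is DState _ _ _ _ then true else false.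

Lemma val_cat M S X : val M (S ++ X) = foldr (hf M) (val M X) S.
Proof. by rewrite /val foldr_cat. Qed.

Lemma step_dec (Q : query Sg) (st st' : dstate Sg) : dml_query Q -> valid_dstate Q st -> dstep st st' -> isSt st' ->
  Mst st' <= Mst st /\ Vst (Mst st) st' < Vst (Mst st) st.
Proof.
move=> hQ hv hs; case: hs hv => //=.
- move=> F F' Fs S X Y hl hv _.
  have hok : dallok Q X by exact: (@foldr_and_cat _ _ S _ hv).
  have [h1 h2] := @dlocal_dec Q (size F + tsum (S ++ X)) F X Y hQ hl (leq_addr (tsum (S ++ X)) (size F)) hok.
  split; first by rewrite !tsum_cat; lia.
  rewrite !val_cat; exact: (@val_mono _ S _ _ h2).1.
- move=> F F' Fs S vs s f hv _; rewrite !tsum_cat !val_cat /tsum /=; split; [lia|].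
  apply: (@val_mono _ S _ _ _).1; rewrite /lt' /=; split => //.
- move=> F F' Fs S H vs s B P R b G H' K L hw hF hH hfm hK hv _.
  have [hok _] : dallok Q [:: DIter H vs s B P R] by exact: (@foldr_and_cat _ _ S _ hv).
  have hcl := @subq_from Q P R hQ hok.
  move: hF hH; set I := inst _ _ => hF hH.
  have := perm_size hF; have := perm_size hH.
  rewrite /I !size_cat /inst !size_map !size_cat => eH eF.
  rewrite !tsum_cat !val_cat /tsum /= ?size_cat ?size_map ?size_cat; split; [lia|].
  set M0 := size F + _.
  apply: (@val_mono _ S _ _ _).1; rewrite /lt' /=.
  move: hcl; rewrite /terminating /semi_terminating /nilp size_cat.
  case hsa: (success_assured R) => /= hcl.
  + have hk : size H' + size (pkeep P) < size H by lia.
    have := @W_lt M0 R _ _ hk; split=> //; lia.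
  + have hk : size H' + size (pkeep P) + size (pdel P) < size H by lia.
    have := @W_lt M0 R _ _ hk; split=> //; lia.
- move=> F F' Fs S H vs s B F0 P R hv _.
  rewrite !tsum_cat !val_cat /tsum /= ?size_cat; split; [lia|].
  by apply: (@val_mono _ S _ _ _).1; rewrite /lt' /= ?size_cat; split => //; lia.
Qed.

End Proof.

Lemma no_lex_desc (g : nat -> nat * nat) :
  (forall n, (g n.+1).1 < (g n).1 \/ ((g n.+1).1 = (g n).1 /\ (g n.+1).2 < (g n).2)) -> False.
Proof.
move=> hg.
suff: forall x y n, g n = (x, y) -> False by move/(_ (g 0).1 (g 0).2 0); apply; case: (g 0).
elim/ltn_ind => x IHx; elim/ltn_ind => y IHy n e.
have := hg n; rewrite e /=.
case hn: (g n.+1) => [x' y'] /= [h|[h1 h2]].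
- exact: (IHx _ h y' n.+1).
- subst x'; exact: (IHy _ h2 n.+1).
Qed.

Theorem theorem6 (Sg : DMLsig) (Q : query Sg) :
  dml_query Q ->
  ~ (exists f : nat -> dstate Sg,
        (forall n, valid_dstate Q (f n)) /\ (forall n, dstep (f n) (f n.+1))).
Proof.
move=> hQ [f [hv hs]].
have hst : forall n, isSt Sg (f n).
  move=> n; case: (hs n) => //.
apply: (@no_lex_desc (fun n => (Mst Sg (f n), Vst Sg (Mst Sg (f n)) (f n)))) => n /=.
have [h1 h2] := @step_dec Sg Q _ _ hQ (hv n) (hs n) (hst n.+1).
case: (ltngtP (Mst Sg (f n.+1)) (Mst Sg (f n))) h1 => // h _; first by left.
by right; rewrite h.
Qed.
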